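(* Let $k\ge2$ and let $\alpha,\beta,\tau$ be the group formulas $\alpha(x)=\forall y\,([y^{-1}xy,x]=e)$, $\beta(y)=\forall x\,(\alpha(x)\rightarrow y^{-1}xy=x^k)$, and $\tau(x,y,h,b_1)=\alpha(x)\wedge\alpha(y)\wedge([h,b_1]=e)\wedge\beta(b_1)\wedge\forall v\,\forall w\,\big([v,b_1]=[w,b_1]=e\wedge\gamma(h,v,w,b_1)\rightarrow\exists u\,(\alpha(u)\wedge[v,y]=[w,x][v,[u,v]])\big)$, where $\gamma(x,y,z,t)$ is a group formula such that for every $b_1\in Ab$ and all $n,l,m\in\mathbb{Z}$, $BS(1,k)\models\gamma(b_1^n,b_1^l,b_1^m,b_1)$ iff $nl=m$. Then the formula $\pi(x)=\forall c\,\forall v\,\big(\alpha(c)\wedge\beta(v)\rightarrow\exists w\,\exists h\,([w,v]=e\wedge\tau(x,w^{-1}cw,h,v))\big)$ defines the set $A_1$ in $BS(1,k)$.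
   Context: $BS(1,k)=\langle a,b\mid b^{-1}ab=a^k\rangle$, identified with $\mathbb{Z}[1/k]\rtimes\mathbb{Z}$ (pairs $(y,m)$, $y\in\mathbb{Z}[1/k]=\{zk^i:z,i\in\mathbb{Z}\}$, product $(y_1,m_1)(y_2,m_2)=(y_1+y_2k^{-m_1},m_1+m_2)$), with $a=(1,0)$, $b=(0,1)$; $a^y=(y,0)$. $Ab=\{a^yb:y\in\mathbb{Z}[1/k]\}$ and $A_1=\{a^y: y\text{ a unit of }\mathbb{Z}[1/k]\}$. The commutator is $[x,y]=x^{-1}y^{-1}xy$. *)

(* Defs.v *)
(* BS(1,k) = Z[1/k] ⋊ Z, realised inside Q × Z. *)
From mathcomp Require Import all_boot all_order all_algebra.
Set Implicit Arguments. Unset Strict Implicit. Unset Printing Implicit Defensive.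
Import Order.TTheory GRing.Theory Num.Theory.
Local Open Scope ring_scope.

Section BS.
Variable k : nat.

Definition G := (rat * int)%type.

Definition inZk (y : rat) : Prop :=
  exists (z i : int), y = z%:~R * (k%:R : rat) ^ i.

Definition inBS (g : G) : Prop := inZk g.1.

Definition gmul (p q : G) : G :=
  (p.1 + q.1 * (k%:R : rat) ^ (- p.2), p.2 + q.2).
Definition ginv (p : G) : G := (- (p.1 * (k%:R : rat) ^ p.2), - p.2).
Definition gone : G := (0, 0).

Definition ga : G := (1, 0).
Definition gb : G := (0, 1).
Definition gapow (y : rat) : G := (y, 0).

Definition gpow (g : G) (n : nat) : G := iter n (gmul g) gone.
Definition gzpow (g : G) (m : int) : G :=
  match m with
  | Posz n => gpow g n
  | Negz n => gpow (ginv g) n.+1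
  end.

Definition gcomm (x y : G) : G := gmul (gmul (gmul (ginv x) (ginv y)) x) y.
Definition gconj (x y : G) : G := gmul (gmul (ginv y) x) y.

Definition inAb (g : G) : Prop := exists y, inZk y /\ g = gmul (gapow y) gb.

Definition unitZk (y : rat) : Prop :=
  inZk y /\ exists y', inZk y' /\ y * y' = 1.
Definition inA1 (g : G) : Prop := exists y, unitZk y /\ g = gapow y.

Inductive gterm :=
  | TVar of nat | TOne | TMul of gterm & gterm | TInv of gterm.

Inductive gform :=
  | FEq of gterm & gterm
  | FFalse
  | FNot of gform
  | FAnd of gform & gform
  | FOr of gform & gform
  | FImp of gform & gform
  | FAll of nat & gform
  | FEx of nat & gform.

Fixpoint teval (env : nat -> G) (t : gterm) : G :=
  match t with
  | TVar i => env i
  | TOne => gone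
  | TMul s u => gmul (teval env s) (teval env u)
  | TInv s => ginv (teval env s)
  end.

Definition upd (env : nat -> G) (i : nat) (g : G) : nat -> G :=
  fun j => if j == i then g else env j.

Fixpoint sat (env : nat -> G) (f : gform) : Prop :=
  match f with
  | FEq s u => teval env s = teval env u
  | FFalse => False
  | FNot g => ~ sat env g
  | FAnd g h => sat env g /\ sat env h
  | FOr g h => sat env g \/ sat env h
  | FImp g h => sat env g -> sat env h
  | FAll i g => forall x, inBS x -> sat (upd env i x) g
  | FEx i g => exists x, inBS x /\ sat (upd env i x) g
  end.

(* gamma(x,y,z,t): the formula with its variables 0,1,2,3 set to x,y,z,t
   (other variables, if any occur free, are set to e) *)
Definition gsat4 (gam : gform) (x y z t : G) : Prop :=
  sat (fun i => nth gone [:: x; y; z; t] i) gam.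

Definition alpha (x : G) : Prop :=
  forall y, inBS y -> gcomm (gconj x y) x = gone.

Definition beta (y : G) : Prop :=
  forall x, inBS x -> alpha x -> gconj x y = gpow x k.

Definition tau (gam : gform) (x y h b1 : G) : Prop :=
  alpha x /\ alpha y /\ gcomm h b1 = gone /\ beta b1 /\
  forall v, inBS v -> forall w, inBS w ->
    (gcomm v b1 = gone /\ gcomm w b1 = gone /\ gsat4 gam h v w b1) ->
    exists u, inBS u /\ alpha u /\
      gcomm v y = gmul (gcomm w x) (gcomm v (gcomm u v)).

Definition piF (gam : gform) (x : G) : Prop :=
  forall c, inBS c -> forall v, inBS v ->
    alpha c /\ beta v ->
    exists w, inBS w /\ exists h, inBS h /\
      gcomm w v = gone /\ tau gam x (gconj c w) h v.

End BS.

(* Main.v *)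
Require Import Defs.
From mathcomp Require Import all_boot all_order all_algebra.
From mathcomp Require Import ring zify.
Import Order.TTheory GRing.Theory Num.Theory.
Local Open Scope ring_scope.

Section Proof.
Variable k : nat.
Hypothesis hk : (2 <= k)%N.
Local Notation K := (k%:R : rat).

Lemma K_neq0 : K != 0.
Proof. by rewrite pnatr_eq0 -lt0n; apply: leq_trans hk. Qed.

Lemma KN_neq0 (N : nat) : K ^+ N != 0.
Proof. by rewrite expf_neq0 // K_neq0. Qed.

Lemma inZkE y : inZk k y <-> exists (N : nat) (z : int), y * K ^+ N = z%:~R.
Proof.
split.
- case=> z [i ->]; case: i => n.
  + exists 0%N, (z * (k ^ n)%:Z). by rewrite expr0 mulr1 intrM -pmulrn natrX.
  + exists n.+1, z; rewrite NegzE -exprnN -mulrA mulVf ?mulr1 //.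
    exact: KN_neq0.
- case=> N [z e]; exists z, (- (N%:Z)); rewrite -e -mulrA -exprnN.
  by rewrite mulfV ?mulr1 // KN_neq0.
Qed.

Lemma Zk_int (z : int) : inZk k z%:~R.
Proof. by apply/inZkE; exists 0%N, z; rewrite expr0 mulr1. Qed.

Lemma Zk_nat (n : nat) : inZk k n%:R.
Proof. by rewrite pmulrn; apply: Zk_int. Qed.

Lemma Zk_K (i : int) : inZk k (K ^ i).
Proof. by exists 1, i; rewrite mul1r. Qed.

Lemma Zk_add y1 y2 : inZk k y1 -> inZk k y2 -> inZk k (y1 + y2).
Proof.
move=> /inZkE [N1 [z1 e1]] /inZkE [N2 [z2 e2]]; apply/inZkE.
exists (N1 + N2)%N, (z1 * (k ^ N2)%:Z + z2 * (k ^ N1)%:Z).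
rewrite intrD !intrM -!pmulrn !natrX -e1 -e2 exprD; ring.
Qed.

Lemma Zk_mul y1 y2 : inZk k y1 -> inZk k y2 -> inZk k (y1 * y2).
Proof.
move=> /inZkE [N1 [z1 e1]] /inZkE [N2 [z2 e2]]; apply/inZkE.
exists (N1 + N2)%N, (z1 * z2).
rewrite intrM -e1 -e2 exprD; ring.
Qed.

Lemma Zk_opp y : inZk k y -> inZk k (- y).
Proof. by move=> h; rewrite -mulN1r; apply: Zk_mul => //; apply: (Zk_int (-1)). Qed.

Lemma Zk_sub y1 y2 : inZk k y1 -> inZk k y2 -> inZk k (y1 - y2).
Proof. by move=> h1 h2; apply: Zk_add => //; apply: Zk_opp. Qed.

Lemma Zk_exp y n : inZk k y -> inZk k (y ^+ n).
Proof. by move=> h; elim: n => [|n IH]; [rewrite expr0; exact: (Zk_nat 1) | rewrite exprS; apply: Zk_mul]. Qed.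


Local Notation gmul := (gmul k).
Local Notation ginv := (ginv k).
Local Notation gcomm := (gcomm k).
Local Notation gconj := (gconj k).
Local Notation gpow := (gpow k).
Local Notation gzpow := (gzpow k).
Local Notation inBS := (inBS k).
Local Notation gone := gone.

Lemma pairE (p : G) : p = (p.1, p.2). Proof. by case: p. Qed.

Lemma gmulA p q r : gmul (gmul p q) r = gmul p (gmul q r).
Proof.
case: p => p1 p2; case: q => q1 q2; case: r => r1 r2; rewrite /Defs.gmul /=.
congr (_, _); last by rewrite addrA.
rewrite opprD expfzDr ?K_neq0 //; ring.
Qed.

Lemma gmul1g p : gmul gone p = p.
Proof. case: p => p1 p2; rewrite /Defs.gmul /= oppr0 expr0z; congr (_,_); ring. Qed.

Lemma gmulg1 p : gmul p gone = p.
Proof. case: p => p1 p2; rewrite /Defs.gmul /=; congr (_,_); ring. Qed.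

Lemma gmulVg p : gmul (ginv p) p = gone.
Proof. case: p => p1 p2; rewrite /Defs.gmul /Defs.ginv /= opprK; congr (_,_); ring. Qed.

Lemma gmulgV p : gmul p (ginv p) = gone.
Proof.
case: p => p1 p2; rewrite /Defs.gmul /Defs.ginv /=; congr (_,_); last by ring.
rewrite mulNr -mulrA -expfzDr ?K_neq0 // subrr expr0z; ring.
Qed.

Lemma gmulKV p q : gmul (ginv p) (gmul p q) = q.
Proof. by rewrite -gmulA gmulVg gmul1g. Qed.

Lemma gmulK p q : gmul p (gmul (ginv p) q) = q.
Proof. by rewrite -gmulA gmulgV gmul1g. Qed.

Lemma gcomm_eq1 p q : gcomm p q = gone <-> gmul p q = gmul q p.
Proof.
rewrite /Defs.gcomm; split => h.
- have := congr1 (gmul (gmul q p)) h; rewrite gmulg1 => <-.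
  by rewrite !gmulA gmulK gmulK.
- by rewrite !gmulA h gmulKV gmulVg.
Qed.

Definition gcommute p q := gmul p q = gmul q p.

Lemma gcommute_inv a g : gcommute a (ginv g) -> gcommute a g.
Proof.
rewrite /gcommute => h.
have h1 : gmul g (gmul a (ginv g)) = a by rewrite h gmulK.
by rewrite -{1}h1 !gmulA gmulVg gmulg1.
Qed.

Lemma gpow_comm g n : gcommute (gpow g n) g.
Proof.
elim: n => [|n IH]; first by rewrite /gcommute /Defs.gpow /= gmul1g gmulg1.
by rewrite /gcommute /Defs.gpow /= -/(gpow g n) gmulA -IH.
Qed.

Lemma gzpow_comm g m : gcommute (gzpow g m) g.
Proof. case: m => n; [exact: gpow_comm | apply: gcommute_inv; exact: gpow_comm]. Qed.

Lemma gzpow_comm1 g m : gcomm (gzpow g m) g = gone.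
Proof. by apply/gcomm_eq1; apply: gzpow_comm. Qed.

Lemma gpow2 g n : (gpow g n).2 = g.2 * n%:Z.
Proof.
elim: n => [|n IH]; first by rewrite mulr0.
by rewrite /Defs.gpow /= -/(gpow g n) IH -addn1 PoszD; ring.
Qed.

Lemma gzpow2 g m : (gzpow g m).2 = g.2 * m.
Proof.
case: m => n; [exact: gpow2 | ].
by rewrite gpow2 NegzE /=; ring.
Qed.

Lemma BS_mul p q : inBS p -> inBS q -> inBS (gmul p q).
Proof. by rewrite /Defs.inBS /= => h1 h2; apply: Zk_add => //; apply: Zk_mul => //; apply: Zk_K. Qed.

Lemma BS_inv p : inBS p -> inBS (ginv p).
Proof. by rewrite /Defs.inBS /= => h; apply: Zk_opp; apply: Zk_mul => //; apply: Zk_K. Qed.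

Lemma BS_one : inBS gone.
Proof. exact: (Zk_int 0). Qed.

Lemma BS_pow g n : inBS g -> inBS (gpow g n).
Proof. by move=> h; elim: n => [|n IH]; [exact: BS_one | apply: BS_mul]. Qed.

Lemma BS_zpow g m : inBS g -> inBS (gzpow g m).
Proof. case: m => n h; first exact: BS_pow. by apply: BS_pow; apply: BS_inv. Qed.

Lemma gmulAA x y : gmul (x, 0) (y, 0) = (x + y, 0).
Proof. by rewrite /Defs.gmul /= oppr0 expr0z mulr1 addr0. Qed.

Lemma ginvA t : ginv (t, 0) = (- t, 0).
Proof. by rewrite /Defs.ginv /= expr0z mulr1 oppr0. Qed.

Lemma gconjA t p : gconj (t, 0) p = (t * K ^ p.2, 0).
Proof.
case: p => p1 p2; rewrite /Defs.gconj /Defs.gmul /Defs.ginv /= !addr0 !opprK.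
congr (_,_); ring.
Qed.

Lemma gcommpA p t : gcomm p (t, 0) = (t * (1 - K ^ p.2), 0).
Proof.
rewrite /Defs.gcomm -/(gconj (ginv (t,0)) p) ginvA gconjA gmulAA; congr (_,_); ring.
Qed.

Lemma gcommAp t p : gcomm (t, 0) p = (t * (K ^ p.2 - 1), 0).
Proof.
rewrite /Defs.gcomm gmulA gmulA -(gmulA _ (t,0)) -/(gconj (t,0) p) gconjA ginvA gmulAA.
congr (_,_); ring.
Qed.

Lemma Kz_eq1 z : K ^ z = 1 -> z = 0.
Proof.
have hK1 : K != 1 by rewrite pnatr_eq1; case: k hk => [|[]].
have K0 : 0 <= K by [].
case: z => n.
- case: n => [//|n] /= /eqP; by rewrite pexpr_eq1 // (negbTE hK1).
- rewrite NegzE -exprnN => /eqP; rewrite invr_eq1 pexpr_eq1 //.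
  by rewrite (negbTE hK1).
Qed.


Lemma alphaA t : alpha k (t, 0).
Proof. by move=> y _; rewrite gconjA gcommAp /= expr0z subrr mulr0. Qed.

Lemma BS_ga : inBS ga.
Proof. exact: (Zk_nat 1). Qed.

Lemma alpha2 x : alpha k x -> x.2 = 0.
Proof.
move=> h; have /gcomm_eq1 := h ga BS_ga.
case: x {h} => x1 x2; rewrite /Defs.gconj /Defs.gmul /Defs.ginv /= => -[e1 _].
move: e1; rewrite !(oppr0, add0r, addr0, expr0z, opprK, mul1r, mulr1); set X := K ^ (- x2) => e1.
have hX : K ^ (- x2) = X by []. clearbody X.
have : (X - 1) ^+ 2 = 0.
  have -> : (X - 1) ^+ 2 = (x1 + (-1 + x1 + X) * X) - (-1 + x1 + X + x1 * X) by ring.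
  by rewrite e1 subrr.
move/eqP; rewrite sqrf_eq0 subr_eq0 -hX => /eqP /Kz_eq1 /eqP; rewrite oppr_eq0 => /eqP //.
Qed.

Lemma gpowA t n : gpow (t, 0) n = (t * n%:R, 0).
Proof.
elim: n => [|n IH]; first by rewrite mulr0.
by rewrite /Defs.gpow /= -/(gpow (t,0) n) IH gmulAA -addn1 natrD; congr (_,_); ring.
Qed.

Lemma beta2 v : beta k v -> v.2 = 1.
Proof.
move=> h; have := h ga BS_ga (alphaA 1).
rewrite gconjA gpowA mul1r => -[] /(congr1 (fun x => x / K)).
rewrite mul1r mulfV ?K_neq0 // -exprN1 -expfzDr ?K_neq0 // => /Kz_eq1 /eqP.
by rewrite subr_eq0 => /eqP.
Qed.

Lemma betaAb z : beta k (z, 1).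
Proof.
move=> x _ /alpha2 h; rewrite (pairE x) h gconjA gpowA /= expr1z //.
Qed.

Lemma cent_uniq z p q : gcommute p (z, 1) -> gcommute q (z, 1) -> p.2 = q.2 -> p = q.
Proof.
case: p => p1 p2; case: q => q1 q2 /=; rewrite /gcommute /Defs.gmul /= => -[e1 _] [e2 _] e; subst q2.
congr (_,_).
have hK : 1 - K ^ (-1) != 0.
  by rewrite subr_eq0 eq_sym; apply/eqP => /Kz_eq1.
apply: (mulIf hK); transitivity (z - z * K ^ (- p2)).
  apply/eqP; rewrite -subr_eq0; apply/eqP.
  have -> : p1 * (1 - K ^ (-1)) - (z - z * K ^ (- p2)) = (p1 + z * K ^ (- p2)) - (z + p1 * K ^ (-1)) by ring.
  by rewrite e1 subrr.
apply/eqP; rewrite eq_sym -subr_eq0; apply/eqP.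
have -> : q1 * (1 - K ^ (-1)) - (z - z * K ^ (- p2)) = (q1 + z * K ^ (- p2)) - (z + q1 * K ^ (-1)) by ring.
by rewrite e2 subrr.
Qed.


Lemma geomF_nat {X : rat} : inZk k X -> forall n : nat,
  exists q, inZk k q /\ X ^+ n - 1 - n%:R * (X - 1) = (X - 1) ^+ 2 * q.
Proof.
move=> hX; elim=> [|n [q [hq e]]].
  by exists 0; split; [exact: (Zk_nat 0) | rewrite expr0 mulr0 mul0r; ring].
exists (n%:R + X * q); split; first by apply: Zk_add; [exact: Zk_nat | exact: Zk_mul].
have e' : X ^+ n = (X - 1) ^+ 2 * q + 1 + n%:R * (X - 1) by rewrite -e; ring.
by rewrite exprS e' mulrSr; ring.
Qed.

Lemma geomF (X : rat) : inZk k X -> X != 0 -> inZk k X^-1 -> forall n : int,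
  exists q, inZk k q /\ X ^ n - 1 - n%:~R * (X - 1) = (X - 1) ^+ 2 * q.
Proof.
move=> hX X0 hXV; case=> n.
  have [q [hq e]] := geomF_nat hX n; exists q; split => //.
have [q [hq e]] := geomF_nat hXV n.+1.
exists (X^-1 ^+ 2 * q + n.+1%:R * X^-1); split.
  apply: Zk_add; [apply: Zk_mul => //; exact: Zk_exp | apply: Zk_mul => //; exact: Zk_nat].
have e' : X^-1 ^+ n.+1 = (X^-1 - 1) ^+ 2 * q + 1 + n.+1%:R * (X^-1 - 1) by rewrite -e; ring.
rewrite NegzE -exprnN -exprVn e' intrN -pmulrn.
by field.
Qed.


Lemma nt_key (c1 ze : int) (N M L : nat) : (0 < L)%N ->
  c1 * (k ^ N)%N%:Z = ze * ((k ^ L - 1)%N * k ^ M)%N%:Z ->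
  (`|c1| < k ^ L - 1)%N -> c1 = 0.
Proof.
move=> L0 e lt.
have e' := congr1 absz e; rewrite !abszM !absz_nat in e'.
set D := (k ^ L - 1)%N in e' lt.
have dv : (D %| `|c1| * k ^ N)%N by rewrite e' dvdn_mull // dvdn_mulr.
have cop : coprime D (k ^ N).
  apply: coprimeXr; apply: (@coprime_dvdr _ D.+1); last exact: coprimenS.
  have -> : D.+1 = (k ^ L)%N.
    by rewrite /D subn1 prednK // expn_gt0 (leq_trans _ hk).
  exact: dvdn_exp.
rewrite Gauss_dvdl // in dv.
apply/eqP; rewrite -absz_eq0; apply/negPn/negP => nz.
by have := dvdn_leq _ dv; rewrite lt0n nz leqNgt lt => /(_ isT).
Qed.

Lemma eqn_main v' w' ty r s :
  gcomm v' (ty, 0) = gmul (gcomm w' (r, 0)) (gcomm v' (gcomm (s, 0) v')) <->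
  ty * (1 - K ^ v'.2) = r * (1 - K ^ w'.2) + s * (K ^ v'.2 - 1) * (1 - K ^ v'.2).
Proof.
rewrite gcommAp gcommpA gcommpA gcommpA gmulAA; split; first by case.
by move=> ->.
Qed.

Lemma BS_gb : inBS gb.
Proof. exact: (Zk_int 0). Qed.

Lemma inAb_z1 z : inZk k z -> inAb k (z, 1).
Proof.
move=> hz; exists z; split => //.
by rewrite /Defs.gmul /gapow /gb /=; congr (_,_); ring.
Qed.


Section Main.
Variable gam : gform.
Hypothesis hgam : forall b1, inBS b1 -> inAb k b1 ->
     forall n l m : int,
       gsat4 k gam (gzpow b1 n) (gzpow b1 l) (gzpow b1 m) b1 <-> n * l = m.

Lemma dir_back x : inA1 k x -> piF k gam x.
Proof.
case=> r [[hr [r' [hr' rr']]] ->] c hc v hv [ac bv].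
have ec : c = (c.1, 0) by rewrite (pairE c) (alpha2 _ ac).
move: hc ac; rewrite ec; set t := c.1 => ht _; clearbody t.
case: v hv bv => z vz hv bv; have /= vz1 := beta2 _ bv; subst vz.
have /inZkE [N [z0 e0]] : inZk k (t * r') by apply: Zk_mul.
have tK : t * K ^ N = r * z0%:~R.
  rewrite -e0; have -> : r * (t * r' * K ^+ N) = (r * r') * (t * K ^+ N) by ring.
  by rewrite rr' mul1r.
exists (gzpow (z, 1) N); split; first exact: BS_zpow.
exists (gzpow (z, 1) z0); split; first exact: BS_zpow.
split; first exact: gzpow_comm1.
split; first exact: alphaA.
split; first by rewrite gconjA; apply: alphaA.
split; first exact: gzpow_comm1.
split; first exact: bv.
move=> v' hv' w' hw' [cv' [cw' gs]].
have ev' : v' = gzpow (z, 1) v'.2.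
  apply: (cent_uniq z); [exact/gcomm_eq1 | exact: gzpow_comm | by rewrite gzpow2 mul1r].
have ew' : w' = gzpow (z, 1) w'.2.
  apply: (cent_uniq z); [exact/gcomm_eq1 | exact: gzpow_comm | by rewrite gzpow2 mul1r].
move: gs; rewrite /gsat4 ev' ew' => gs.
have hm := (hgam (z, 1) hv (inAb_z1 z hv) z0 v'.2 w'.2).1 gs.
set l := v'.2 in hm *; set m := w'.2 in hm *.
have hXV : inZk k (K ^ l)^-1 by rewrite invr_expz; apply: Zk_K.
have [q [hq eqq]] := geomF (K ^ l) (Zk_K l) (expfz_neq0 l K_neq0) hXV z0.
exists (- (r * q), 0); split; first exact: (Zk_opp _ (Zk_mul _ _ hr hq)).
split; first exact: alphaA.
rewrite gconjA.
apply/(eqn_main (gzpow (z, 1) l) (gzpow (z, 1) m) (t * K ^ (gzpow (z, 1) N).2) r (- (r * q))).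
rewrite !gzpow2 !mul1r tK -hm (mulrC z0 l) -exprz_exp.
have e' : (K ^ l) ^ z0 = (K ^ l - 1) ^+ 2 * q + 1 + z0%:~R * (K ^ l - 1) by rewrite -eqq; ring.
rewrite e'; ring.
Qed.


Lemma dir_fwd x : inBS x -> piF k gam x -> inA1 k x.
Proof.
move=> hx P.
have [w [hw [h [hh [_ [ax [_ [ch [_ T]]]]]]]]] := P ga BS_ga gb BS_gb (conj (alphaA 1) (betaAb 0)).
have x2 := alpha2 _ ax.
have hr : inZk k x.1 := hx.
have eh : h = gzpow gb h.2.
  apply: (cent_uniq 0); [exact/gcomm_eq1 | exact: gzpow_comm | by rewrite gzpow2 mul1r].
have gb2 : gb.2 = 1 by [].
have hc0 : inZk k (K ^ w.2 - x.1 * h.2%:~R).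
  apply: Zk_sub; [exact: Zk_K | exact: (Zk_mul _ _ hr (Zk_int h.2))].
have /inZkE [M [c1 e1]] := hc0.
pose L : nat := (`|c1| + 1)%N.
have hL0 : (0 < L)%N by rewrite /L addn1.
have := T (gzpow gb L) (BS_zpow _ L BS_gb) (gzpow gb (h.2 * L)) (BS_zpow _ _ BS_gb).
case.
  split; first exact: gzpow_comm1.
  split; first exact: gzpow_comm1.
  rewrite {1}eh; apply/(hgam gb BS_gb (inAb_z1 0 (Zk_int 0)) h.2 L (h.2 * L)).
  by [].
move=> u [hu [au E]].
have eu : u = (u.1, 0) by rewrite (pairE u) (alpha2 _ au).
have hs : inZk k u.1 := hu.
move: E; rewrite eu gconjA (pairE x) x2 => E.
have E' := (eqn_main (gzpow gb L) (gzpow gb (h.2 * L)) (1 * K ^ w.2) x.1 u.1).1 E.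
move: E'; rewrite !gzpow2 gb2 !mul1r (mulrC h.2) -exprz_exp => {}E.
have hXV : inZk k (K ^ (L:int))^-1 by rewrite invr_expz; apply: Zk_K.
have [q [hq eqq]] := geomF (K ^ (L:int)) (Zk_K L) (expfz_neq0 L K_neq0) hXV h.2.
have e' : (K ^ (L:int)) ^ h.2 = (K ^ (L:int) - 1) ^+ 2 * q + 1 + h.2%:~R * (K ^ (L:int) - 1) by rewrite -eqq; ring.
rewrite e' in E.
have X1 : K ^ (L:int) - 1 != 0.
  rewrite subr_eq0; apply/eqP => /Kz_eq1 [] /eqP; rewrite /L addn1.
  by [].
have ec0 : K ^ w.2 - x.1 * h.2%:~R = (x.1 * q + u.1) * (K ^ (L:int) - 1).
  apply: (mulfI X1); apply/eqP; rewrite -subr_eq0; apply/eqP.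
  have -> : (K ^ (L:int) - 1) * (K ^ w.2 - x.1 * h.2%:~R) - (K ^ (L:int) - 1) * ((x.1 * q + u.1) * (K ^ (L:int) - 1)) =
    - (K ^ w.2 * (1 - K ^ (L:int)) - (x.1 * (1 - ((K ^ (L:int) - 1) ^+ 2 * q + 1 + h.2%:~R * (K ^ (L:int) - 1))) + u.1 * (K ^ (L:int) - 1) * (1 - K ^ (L:int)))) by ring.
  by rewrite E subrr oppr0.
have he : inZk k (x.1 * q + u.1) by apply: Zk_add => //; apply: Zk_mul.
have /inZkE [Ne [ze eNe]] := he.
have KL : K ^ (L:int) = K ^+ L by [].
have eint : c1 * (k ^ Ne)%N%:Z = ze * ((k ^ L - 1)%N * k ^ M)%N%:Z.
  apply: (@intr_inj rat); rewrite !intrM -!pmulrn natrM natrB ?expn_gt0 ?(leq_trans _ hk) // !natrX.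
  rewrite -e1 -eNe ec0 KL; ring.
have c10 : c1 = 0.
  apply: (nt_key _ _ _ _ _ hL0 eint).
  have := ltn_expl L hk; rewrite /L; lia.
move: e1; rewrite c10 => /eqP; rewrite mulf_eq0 (negbTE (KN_neq0 M)) orbF subr_eq0 => /eqP ej.
exists x.1; split; last by rewrite (pairE x) x2.
split => //; exists (h.2%:~R * K ^ (- w.2)); split.
  exact: (Zk_mul _ _ (Zk_int h.2) (Zk_K (- w.2))).
by rewrite mulrA -ej -expfzDr ?K_neq0 // subrr expr0z.
Qed.

End Main.
End Proof.

Theorem lemma4p10 (k : nat) (hk : (2 <= k)%N) (gam : gform)
  (hgam : forall b1, inBS k b1 -> inAb k b1 ->
     forall n l m : int,
       gsat4 k gam (gzpow k b1 n) (gzpow k b1 l) (gzpow k b1 m) b1 <-> n * l = m) :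
  forall x, inBS k x -> (piF k gam x <-> inA1 k x).
Proof.
move=> x hx; split; first exact: (dir_fwd k hk gam hgam x hx).
exact: (dir_back k hk gam hgam x).
Qed.
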